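(* Let $c:\mathbb{R}^{n_x}\to\mathbb{R}^m$ be a smooth function with $c(x)=(c_1(x),\dots,c_m(x))$ such that $\nabla c(x)\in\mathbb{R}^{n_x\times m}$ has rank $m$. Let $S\in\mathbb{R}^{2^m\times m}$ be a matrix whose rows are pairwise distinct and whose entries all lie in $\{-1,1\}$ (so its rows are exactly the $2^m$ sign vectors), and denote by $S_{i,\bullet}$ its $i$-th row. For $i\in\{1,\dots,2^m\}$ define $$R'_i=\{x\in\mathbb{R}^{n_x}\mid \mathrm{diag}(S_{i,\bullet})\,c(x)>0\}$$ (componentwise inequality), and define $g:\mathbb{R}^{n_x}\to\mathbb{R}^{2^m}$ by $g(x)=-S\,c(x)$, with components $g_i(x)$. Let $$R_i=\{x\in\mathbb{R}^{n_x}\mid g_i(x)<\min_{j\neq i} g_j(x)\}.$$ Then for every $i$ and every $x\in R'_i$ the following hold: (i) $g_i(x)<g_j(x)$ for all $j\neq i$; (ii) the two definitions describe the same set, i.e., $R_i=R'_i$.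
   Context: $\mathrm{diag}(v)$ denotes the diagonal matrix with the entries of the vector $v$ on its diagonal. *)

(* Defs.v *)
From HB Require Import structures.
From mathcomp Require Import all_boot all_order all_algebra.
From mathcomp Require Import all_classical all_reals all_analysis.
Set Implicit Arguments. Unset Strict Implicit. Unset Printing Implicit Defensive.
Import Order.TTheory GRing.Theory Num.Theory.
Import numFieldNormedType.Exports.
Local Open Scope ring_scope.
Local Open Scope classical_set_scope.

Definition basis_vec (R : realType) (n : nat) (i : 'I_n) : 'rV[R]_n :=
  delta_mx 0 i.

Definition iter_partial (R : realType) (n : nat) (s : seq 'I_n)
  (f : 'rV[R]_n -> R) : 'rV[R]_n -> R :=
  foldr (fun i g => fun x => 'D_(basis_vec R i) g x) f s.

Definition smooth_fun (R : realType) (n : nat) (f : 'rV[R]_n -> R) : Prop :=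
  forall (s : seq 'I_n) (x : 'rV[R]_n), differentiable (iter_partial s f) x.

Definition comp_fun (R : realType) (nx m : nat) (c : 'rV[R]_nx -> 'cV[R]_m)
  (j : 'I_m) : 'rV[R]_nx -> R := fun x => c x j 0.

Definition grad_mx (R : realType) (nx m : nat) (c : 'rV[R]_nx -> 'cV[R]_m)
  (x : 'rV[R]_nx) : 'M[R]_(nx, m) :=
  \matrix_(i < nx, j < m) 'D_(basis_vec R i) (comp_fun c j) x.

Definition gfun (R : realType) (nx m : nat) (S : 'M[R]_(2 ^ m, m))
  (c : 'rV[R]_nx -> 'cV[R]_m) (x : 'rV[R]_nx) : 'cV[R]_(2 ^ m) :=
  - (S *m c x).

Definition Rprime (R : realType) (nx m : nat) (S : 'M[R]_(2 ^ m, m))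
  (c : 'rV[R]_nx -> 'cV[R]_m) (i : 'I_(2 ^ m)) : set 'rV[R]_nx :=
  [set x | forall k : 'I_m, 0 < (diag_mx (row i S) *m c x) k 0].

(* min_{j <> i} g_j(x), in the extended reals (= +oo if there is no j <> i) *)
Definition min_other (R : realType) (N : nat) (v : 'cV[R]_N) (i : 'I_N)
  : \bar R :=
  \big[Order.min/+oo%E]_(j < N | j != i) ((v j 0)%:E).

Definition Rset (R : realType) (nx m : nat) (S : 'M[R]_(2 ^ m, m))
  (c : 'rV[R]_nx -> 'cV[R]_m) (i : 'I_(2 ^ m)) : set 'rV[R]_nx :=
  [set x | ((gfun S c x i 0)%:E < min_other (gfun S c x) i)%E].

(* Main.v *)
Require Import Defs.
From HB Require Import structures.
From mathcomp Require Import all_boot all_order all_algebra.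
From mathcomp Require Import all_classical all_reals all_analysis.
From mathcomp Require Import lra.
Import Order.TTheory GRing.Theory Num.Theory.
Import numFieldNormedType.Exports.
Local Open Scope ring_scope.
Local Open Scope classical_set_scope.

Lemma gdiff (R : realType) (nx m : nat) (S : 'M[R]_(2 ^ m, m))
  (c : 'rV[R]_nx -> 'cV[R]_m) x i j :
  gfun S c x j 0 - gfun S c x i 0 = \sum_k (S i k - S j k) * c x k 0.
Proof.
rewrite /gfun !mxE opprK addrC -sumrB; apply: eq_bigr => k _.
by rewrite mulrBl.
Qed.

Lemma diagE (R : realType) (nx m : nat) (S : 'M[R]_(2 ^ m, m))
  (c : 'rV[R]_nx -> 'cV[R]_m) x i k :
  (diag_mx (row i S) *m c x) k 0 = S i k * c x k 0.
Proof. by rewrite mul_diag_mx !mxE. Qed.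

Lemma m1n1 (R : realType) : ((-1 : R) == 1) = false.
Proof. by apply/negbTE/eqP => h; have : (0 : R) < 1 by []; lra. Qed.

Lemma sgn_eq (R : realType) (a b : R) : (a = 1 \/ a = -1) -> (b = 1 \/ b = -1) ->
  (a == 1) = (b == 1) -> a = b.
Proof. by case=> ->; case=> ->; rewrite ?eqxx ?m1n1. Qed.

Theorem proposition1 (R : realType) (nx m : nat)
  (c : 'rV[R]_nx -> 'cV[R]_m)
  (hsmooth : forall j : 'I_m, smooth_fun (comp_fun c j))
  (hrank : forall x : 'rV[R]_nx, \rank (grad_mx c x) = m)
  (S : 'M[R]_(2 ^ m, m))
  (hS_sign : forall (i : 'I_(2 ^ m)) (k : 'I_m), S i k = 1 \/ S i k = -1)
  (hS_distinct : forall i j : 'I_(2 ^ m), row i S = row j S -> i = j) :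
  forall i : 'I_(2 ^ m),
    (forall x, Rprime S c i x ->
       forall j : 'I_(2 ^ m), j != i -> gfun S c x i 0 < gfun S c x j 0)
    /\ Rset S c i = Rprime S c i.
Proof.
move=> i.
have part1 : forall x, Rprime S c i x ->
       forall j : 'I_(2 ^ m), j != i -> gfun S c x i 0 < gfun S c x j 0.
  move=> x Hx j Hji.
  have [k0 Hk0] : exists k0, S i k0 != S j k0.
    apply/existsP; apply: contraT; rewrite negb_exists => /forallP H.
    move: Hji; rewrite (hS_distinct j i) ?eqxx //.
    by apply/rowP => k; rewrite !mxE; move: (H k); rewrite negbK => /eqP.
  rewrite -subr_gt0 gdiff (bigD1 k0) //=.
  have hterm : forall k, 0 <= (S i k - S j k) * c x k 0.
    move=> k; have := Hx k; rewrite diagE.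
    by case: (hS_sign i k) => ->; case: (hS_sign j k) => ->;
      rewrite ?subrr ?mul0r // => h; nra.
  apply: ltr_pwDl; last by apply: sumr_ge0 => k _; exact: hterm.
  have := Hx k0; rewrite diagE; move: Hk0.
  by case: (hS_sign i k0) => ->; case: (hS_sign j k0) => ->;
    rewrite ?eqxx // => _ h; nra.
split => //.
apply/seteqP; split => x; last first.
  move=> Hx; rewrite /Rset /= /min_other.
  apply: (big_ind (fun v => (gfun S c x i 0)%:E < v)%E) => //.
  - by rewrite ltry.
  - by move=> a b Ha Hb; rewrite lt_min Ha Hb.
  - by move=> j Hj; rewrite lte_fin; apply: part1.
rewrite /Rset /= => Hx k0.
(* the flipped row *)
pose b (j : 'I_(2 ^ m)) : {ffun 'I_m -> bool} := [ffun k => S j k == 1].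
have binj : injective b.
  move=> j1 j2 /ffunP H; apply: hS_distinct; apply/rowP => k; rewrite !mxE.
  move: (H k); rewrite !ffunE.
  exact: sgn_eq.
have bbij : bijective b.
  by apply: (inj_card_bij binj); rewrite card_ffun !card_ord card_bool.
pose t : {ffun 'I_m -> bool} := [ffun k => if k == k0 then ~~ (S i k == 1) else S i k == 1].
have [b' bK b'K] := bbij.
set j := b' t.
have hbj : b j = t by rewrite /j b'K.
have Sjk : forall k, k != k0 -> S j k = S i k.
  move=> k hk; move/ffunP: hbj => /(_ k); rewrite !ffunE (negbTE hk).
  exact: sgn_eq.
have Sjk0 : S j k0 = - S i k0.
  move/ffunP: hbj => /(_ k0); rewrite !ffunE eqxx.
  by case: (hS_sign i k0) => ->; case: (hS_sign j k0) => ->;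
    rewrite ?eqxx ?m1n1 ?opprK.
have hji : j != i.
  apply/eqP => hji; move: Sjk0; rewrite hji => h.
  have h0 : S i k0 = 0 by clear -h; lra.
  by case: (hS_sign i k0); rewrite h0 => h1; clear -h1; lra.
have : ((gfun S c x i 0)%:E < (gfun S c x j 0)%:E)%E.
  apply: (lt_le_trans Hx); rewrite /min_other (bigD1 j) //=.
  by rewrite ge_min lexx.
rewrite lte_fin -subr_gt0 gdiff (bigD1 k0) //= big1; last first.
  by move=> k hk; rewrite Sjk // subrr mul0r.
clear Hx; by rewrite addr0 Sjk0 diagE; nra.
Qed.
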